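(* Let $k,n$ be positive integers and let $G$ be a graph on $n$ vertices. Then $G\in\mathcal{F}(n,k)$ if and only if $G$ is $k$-maximal.
   Context: Graphs are finite, loopless, possibly with multiple edges. $\kappa'(G)$ is the edge connectivity and $\overline{\kappa'}(G)=\max\{\kappa'(H): H \text{ a subgraph of } G\}$. A graph $G$ is $k$-maximal if $\overline{\kappa'}(G)\le k$ but for any new edge $e\notin E(G)$ joining two vertices of $G$ (possibly parallel to an existing edge), $\overline{\kappa'}(G+e)\ge k+1$. $F(n,k)$ is the maximum number of edges of a graph on $n$ vertices with $\overline{\kappa'}\le k$, and $\mathcal{F}(n,k)=\{G: |V(G)|=n,\ \overline{\kappa'}(G)\le k,\ |E(G)|=F(n,k)\}$. *)

(* Defs.v *)
From mathcomp Require Import all_boot.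
Set Implicit Arguments. Unset Strict Implicit. Unset Printing Implicit Defensive.

(* A finite loopless multigraph on the vertex set 'I_n is given by an edge
   multiplicity function m : 'I_n -> 'I_n -> nat (m i j = number of edges
   joining i and j), which must be symmetric with zero diagonal. *)
Definition mgraph (n : nat) := 'I_n -> 'I_n -> nat.

Definition is_graph n (m : mgraph n) : Prop :=
  (forall i j, m i j = m j i) /\ (forall i, m i i = 0).

Definition nedges n (m : mgraph n) : nat :=
  \sum_(i < n) \sum_(j < n | i < j) m i j.

Definition is_subgraph n (m : mgraph n) (S : {set 'I_n}) (h : mgraph n) : Prop :=
  (forall i j, h i j = h j i) /\ (forall i j, h i j <= m i j) /\
  (forall i j, 0 < h i j -> (i \in S) && (j \in S)).

Definition cut n (S : {set 'I_n}) (h : mgraph n) (X : {set 'I_n}) : nat :=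
  \sum_(i in X) \sum_(j in S :\: X) h i j.

Definition kappa' n (S : {set 'I_n}) (h : mgraph n) : nat :=
  if #|S| <= 1 then 0 else
  \big[minn/(\sum_(i in S) \sum_(j in S) h i j)]_(X : {set 'I_n} |
      [&& X \subset S, X != set0 & X != S]) cut S h X.

Definition kbar_le n (m : mgraph n) (k : nat) : Prop :=
  forall S h, is_subgraph m S h -> kappa' S h <= k.

Definition add_edge n (m : mgraph n) (u v : 'I_n) : mgraph n :=
  fun i j => m i j + (((i == u) && (j == v)) || ((i == v) && (j == u))).

Definition kmaximal n (k : nat) (m : mgraph n) : Prop :=
  kbar_le m k /\
  forall u v : 'I_n, u != v -> ~ kbar_le (add_edge m u v) k.

(* G \in calF(n,k): G has n vertices, kbar'(G) <= k, and |E(G)| = F(n,k),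
   i.e. |E(G)| is the maximum of |E(G')| over graphs G' on n vertices with
   kbar'(G') <= k. *)
Definition in_calF n (k : nat) (m : mgraph n) : Prop :=
  is_graph m /\ kbar_le m k /\
  forall m' : mgraph n, is_graph m' -> kbar_le m' k -> nedges m' <= nedges m.

(* Main.v *)
Require Import Defs.
From mathcomp Require Import all_boot.
From mathcomp Require Import zify.
Set Implicit Arguments. Unset Strict Implicit. Unset Printing Implicit Defensive.

Section Aux.
Variable n : nat.
Implicit Types (g h : mgraph n) (S T X Y : {set 'I_n}).

Definition E2 g := \sum_(i < n) \sum_(j < n) g i j.
Definition restr g X : mgraph n := fun i j => if (i \in X) && (j \in X) then g i j else 0.
Definition cross g X := \sum_(i < n) \sum_(j < n) (if (i \in X) && (j \notin X) then g i j else 0).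
Definition supp g S := forall i j, 0 < g i j -> (i \in S) && (j \in S).

Lemma cutE S h X : cut S h X =
  \sum_(i < n) \sum_(j < n) (if (i \in X) && (j \in S :\: X) then h i j else 0).
Proof.
rewrite /cut big_mkcond; apply: eq_bigr => i _ /=.
case: (i \in X) => /=; first by rewrite big_mkcond.
by rewrite big1.
Qed.

Lemma cut_cross S g X : supp g S -> cut S g X = cross g X.
Proof.
move=> sg; rewrite cutE /cross; apply: eq_bigr => i _; apply: eq_bigr => j _.
rewrite in_setD; case: (i \in X) => //=; case: (j \in X) => //=.
case jS: (j \in S) => //=.
case: (posnP (g i j)) => // /sg; by rewrite jS andbF.
Qed.

Lemma cut_le_cross T h X : cut T h (T :&: X) <= cross h X.
Proof.
rewrite cutE /cross; apply: leq_sum => i _; apply: leq_sum => j _.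
rewrite !in_setD !in_setI.
by case: (i \in T); case: (i \in X); case: (j \in T); case: (j \in X).
Qed.

Lemma cross_mono g h X : (forall i j, h i j <= g i j) -> cross h X <= cross g X.
Proof.
move=> le; apply: leq_sum => i _; apply: leq_sum => j _.
by case: ifP.
Qed.

Lemma bigmin_le_seq (I : eqType) (r : seq I) (P : pred I) (F : I -> nat) x0 y :
  y \in r -> P y -> \big[minn/x0]_(i <- r | P i) F i <= F y.
Proof.
elim: r => //= a r IH; rewrite in_cons big_cons => /orP[/eqP<- Py|yr Py].
  by rewrite Py geq_minl.
case: ifP => _; last exact: IH.
by rewrite geq_min IH ?orbT.
Qed.

Lemma kappa_le_cut T h Y : Y \subset T -> Y != set0 -> Y != T -> kappa' T h <= cut T h Y.
Proof.
move=> sYT Y0 YT; rewrite /kappa'; case: ifP => // _.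
apply: bigmin_le_seq; first by rewrite mem_index_enum.
by rewrite sYT Y0 YT.
Qed.

Lemma exists_cut S h : 1 < #|S| ->
  exists X, [&& X \subset S, X != set0 & X != S] /\ cut S h X <= kappa' S h.
Proof.
move=> S2.
have [x xS] : exists x, x \in S.
  by apply/card_gt0P; apply: leq_trans S2.
have Px : [&& [set x] \subset S, [set x] != set0 & [set x] != S].
  rewrite sub1set xS /=; apply/andP; split; first by apply/set0Pn; exists x; rewrite in_set1.
  apply/eqP => E; move: S2; by rewrite -E cards1.
case: (boolP [exists X : {set 'I_n}, [&& X \subset S, X != set0, X != S & cut S h X <= kappa' S h]]) => [/existsP[X /and4P[a b c d]]|/existsPn H].
  by exists X; rewrite a b c.
have H' : forall X, [&& X \subset S, X != set0 & X != S] -> kappa' S h < cut S h X.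
  move=> X /and3P[a b c]; move: (H X); by rewrite a b c /= -ltnNge.
have lt1 : cut S h [set x] <= \sum_(i in S) \sum_(j in S) h i j.
  rewrite /cut big_set1; apply: (@leq_trans (\sum_(j in S) h x j)).
    rewrite [X in X <= _]big_mkcond [X in _ <= X]big_mkcond; apply: leq_sum => j _.
    by rewrite in_setD; case: (j \in S); rewrite ?andbF ?andbT //=; case: ifP.
  rewrite [in X in _ <= X](bigD1 x) //=; exact: leq_addr.
have : kappa' S h < kappa' S h.
  rewrite {2}/kappa' ifN; last by rewrite -ltnNge.
  apply: (big_ind (fun y => kappa' S h < y)).
  - exact: leq_trans (H' _ Px) lt1.
  - by move=> a b Ha Hb; rewrite leq_min Ha Hb.
  - by move=> X PX; apply: H'.
by rewrite ltnn.
Qed.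

Lemma restr_le g X i j : restr g X i j <= g i j.
Proof. by rewrite /restr; case: ifP. Qed.

Lemma kbar_sub k g h : (forall i j, h i j <= g i j) -> kbar_le g k -> kbar_le h k.
Proof.
move=> le kg S h' [hs [hle hsup]]; apply: kg; split=> //; split=> // i j.
exact: leq_trans (hle i j) (le i j).
Qed.

Lemma cross_add g X u v : u \in X -> v \notin X ->
  cross (add_edge g u v) X <= cross g X + 1.
Proof.
move=> uX vX; rewrite /cross /add_edge.
apply: (@leq_trans (\sum_(i < n) \sum_(j < n)
   ((if (i \in X) && (j \notin X) then g i j else 0) + ((i == u) && (j == v))))).
  apply: leq_sum => i _; apply: leq_sum => j _.
  case: ifP => [/andP[iX jX]|_]; last by [].
  rewrite leq_add2l; case: (@eqP _ i v) => [E|_]; first by move: iX; rewrite E (negbTE vX).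
  by rewrite andFb orbF.
under eq_bigr => i _ do rewrite big_split.
rewrite big_split /= leq_add2l.
rewrite (bigD1 u) //= [X in _ + X]big1 ?addn0; last first.
  by move=> i /negbTE ->; rewrite big1.
rewrite (bigD1 v) //= !eqxx [X in _ + X]big1 //.
by move=> j /negbTE ->; rewrite andbF.
Qed.

Lemma cross_add_in g X u v : u \in X -> v \in X ->
  cross (add_edge g u v) X = cross g X.
Proof.
move=> uX vX; rewrite /cross /add_edge; apply: eq_bigr => i _; apply: eq_bigr => j _.
case: ifP => [/andP[iX jX]|//].
have/negbTE-> : j != u by apply: contraNneq jX => ->.
have/negbTE-> : j != v by apply: contraNneq jX => ->.
by rewrite !andbF addn0.
Qed.

Lemma add_ok k g X u v : cross g X < k -> kbar_le g k -> u \in X -> v \notin X ->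
  kbar_le (add_edge g u v) k.
Proof.
move=> cr kg uX vX T h [hs [hle hsup]].
case: (boolP ((u \in T) && (v \in T))) => [/andP[uT vT] | nuv].
  apply: leq_trans (kappa_le_cut (T := T) (Y := T :&: X) h _ _ _) _.
  - exact: subsetIl.
  - by apply/set0Pn; exists u; rewrite in_setI uT uX.
  - apply/eqP => E; have : v \in T :&: X by rewrite E.
    by rewrite in_setI (negbTE vX) andbF.
  apply: leq_trans (cut_le_cross _ _ _) _; apply: leq_trans (cross_mono X hle) _.
  apply: leq_trans (cross_add g uX vX) _; by rewrite addn1.
apply: kg; split=> //; split=> // i j.
have := hle i j; rewrite /add_edge.
case E: ((i == u) && (j == v) || (i == v) && (j == u)); rewrite ?addn0 // => le1.
case: (posnP (h i j)) => [->//|/hsup/andP[iT jT]].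
exfalso; move/orP: E => [/andP[/eqP ei /eqP ej]|/andP[/eqP ei /eqP ej]]; subst;
  by rewrite iT jT in nuv.
Qed.

Lemma max_restr k g X u v : cross g X <= k -> kbar_le g k -> u \in X -> v \in X ->
  kbar_le (add_edge (restr g X) u v) k -> kbar_le (add_edge g u v) k.
Proof.
move=> cr kg uX vX kr T h [hs [hle hsup]].
case: (set_0Vmem (T :&: X)) => [TX0|[x xTX]].
  apply: kg; split=> //; split=> // i j.
  case: (posnP (h i j)) => [->//|/hsup/andP[iT _]].
  have iX : i \notin X.
    apply/negP => iX; have : i \in T :&: X by rewrite in_setI iT iX.
    by rewrite TX0 in_set0.
  have := hle i j; rewrite /add_edge.
  have/negbTE-> : i != u by apply: contraNneq iX => ->.
  have/negbTE-> : i != v by apply: contraNneq iX => ->.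
  by rewrite /= addn0.
case: (set_0Vmem (T :\: X)) => [TmX0|[y yTX]].
  apply: kr; split=> //; split=> // i j.
  case: (posnP (h i j)) => [->//|/hsup/andP[iT jT]].
  have inX : forall z, z \in T -> z \in X.
    move=> z zT; apply/negPn/negP => nzX; have : z \in T :\: X by rewrite in_setD nzX zT.
    by rewrite TmX0 in_set0.
  by rewrite /add_edge /restr !inX //=; exact: hle.
apply: leq_trans (kappa_le_cut (T := T) (Y := T :&: X) h _ _ _) _.
- exact: subsetIl.
- by apply/set0Pn; exists x.
- apply/eqP => E; move: yTX; rewrite in_setD => /andP[yX yT].
  have : y \in T :&: X by rewrite E.
  by rewrite in_setI (negbTE yX) andbF.
apply: leq_trans (cut_le_cross _ _ _) _; apply: leq_trans (cross_mono X hle) _.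
by rewrite cross_add_in.
Qed.


Lemma cross_sym g X : (forall i j, g i j = g j i) -> cross g (~: X) = cross g X.
Proof.
move=> sg; rewrite /cross exchange_big; apply: eq_bigr => i _; apply: eq_bigr => j _.
by rewrite !in_setC negbK andbC sg.
Qed.

Lemma E2_split g X : (forall i j, g i j = g j i) ->
  E2 g = E2 (restr g X) + E2 (restr g (~: X)) + 2 * cross g X.
Proof.
move=> sg.
have pt : forall i j, g i j = restr g X i j + restr g (~: X) i j
   + (if (i \in X) && (j \notin X) then g i j else 0)
   + (if (j \in X) && (i \notin X) then g j i else 0).
  move=> i j; rewrite /restr !in_setC.
  by case: (i \in X); case: (j \in X) => /=; rewrite ?addn0 ?add0n // sg.
rewrite {1}/E2.
under eq_bigr => i _ do under eq_bigr => j _ do rewrite pt.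
under eq_bigr => i _ do rewrite !big_split.
rewrite !big_split /= mul2n -addnn !addnA; congr (_ + _).
rewrite exchange_big; apply: eq_bigr => i _; apply: eq_bigr => j _.
by [].
Qed.

Lemma supp_restr g S X : supp g S -> supp (restr g X) (S :&: X).
Proof.
move=> sg i j; rewrite /restr; case: ifP => [/andP[iX jX]|]; last by rewrite ltnn.
by move/sg/andP=> [iS jS]; rewrite !in_setI iS iX jS jX.
Qed.

Lemma E2_small g S : #|S| <= 1 -> supp g S -> (forall i, g i i = 0) -> E2 g = 0.
Proof.
move=> /card_le1_eqP S1 sg gd; apply: big1 => i _; apply: big1 => j _.
case: (posnP (g i j)) => // /[dup] pos /sg/andP[iS jS].
by move: pos; rewrite (S1 _ _ iS jS) gd.
Qed.


Lemma split_sizes S X : [&& X \subset S, X != set0 & X != S] ->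
  [/\ #|S :&: X| + #|S :&: ~: X| = #|S|, 0 < #|S :&: X| & 0 < #|S :&: ~: X|].
Proof.
move=> /and3P[sXS X0 XS].
rewrite -setDE cardsID; split => //.
  by rewrite (setIidPr sXS) card_gt0.
rewrite card_gt0 setD_eq0; apply: contra XS => sSX.
by rewrite eqEsubset sXS sSX.
Qed.

Lemma upper k N : forall S g, #|S| <= N -> is_graph g -> supp g S -> kbar_le g k ->
  E2 g <= 2 * k * (#|S|).-1.
Proof.
elim: N => [|N IH] S g SN [gs gd] sg kg.
  by rewrite (E2_small (S := S)) //; apply: leq_trans SN _.
case: (leqP #|S| 1) => S1; first by rewrite (E2_small (S := S)).
have kS : kappa' S g <= k by apply: kg; split=> //; split=> // i j; exact: sg.
have [X [PX cX]] := exists_cut g S1.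
rewrite (cut_cross _ sg) in cX.
have {}cX : cross g X <= k by apply: leq_trans cX kS.
have [ES a b] := split_sizes PX.
rewrite (E2_split X gs).
have gX : is_graph (restr g X).
  by split=> [i j|i]; rewrite /restr ?gd; [rewrite andbC gs|case: ifP].
have gX' : is_graph (restr g (~: X)).
  by split=> [i j|i]; rewrite /restr ?gd; [rewrite andbC gs|case: ifP].
have h1 := IH (S :&: X) (restr g X) ltac:(lia) gX (supp_restr (X:=X) sg)
   (kbar_sub (restr_le g X) kg).
have h2 := IH (S :&: ~: X) (restr g (~: X)) ltac:(lia) gX' (supp_restr (X:=~: X) sg)
   (kbar_sub (restr_le g (~: X)) kg).
have -> : (#|S|).-1 = (#|S :&: X|).-1 + (#|S :&: ~: X|).-1 + 1 by lia.
rewrite !mulnDr muln1; apply: leq_add; first exact: leq_add.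
by rewrite leq_mul2l cX orbT.
Qed.

Lemma lower k N : forall S g, #|S| <= N -> is_graph g -> supp g S -> kbar_le g k ->
  (forall u v, u \in S -> v \in S -> u != v -> ~ kbar_le (add_edge g u v) k) ->
  2 * k * (#|S|).-1 <= E2 g.
Proof.
elim: N => [|N IH] S g SN [gs gd] sg kg mx.
  have -> : (#|S|).-1 = 0 by lia.
  by rewrite muln0.
case: (leqP #|S| 1) => S1.
  have -> : (#|S|).-1 = 0 by lia.
  by rewrite muln0.
have kS : kappa' S g <= k by apply: kg; split=> //; split=> // i j; exact: sg.
have [X [PX cX]] := exists_cut g S1.
rewrite (cut_cross _ sg) in cX.
have {}cX : cross g X <= k by apply: leq_trans cX kS.
have [ES a b] := split_sizes PX.
move: (PX) => /and3P[sXS X0 XS].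
have kc : k <= cross g X.
  rewrite leqNgt; apply/negP => lt.
  have [u uX] := set0Pn _ X0.
  have : S :&: ~: X != set0 by rewrite -card_gt0.
  move=> /set0Pn[v]; rewrite in_setI in_setC => /andP[vS vX].
  apply: (mx u v (subsetP sXS _ uX) vS); first by apply: contraNneq vX => <-.
  exact: (add_ok lt kg uX vX).
have cX' : cross g (~: X) <= k by rewrite cross_sym.
rewrite (E2_split X gs).
have gX : is_graph (restr g X).
  by split=> [i j|i]; rewrite /restr ?gd; [rewrite andbC gs|case: ifP].
have gX' : is_graph (restr g (~: X)).
  by split=> [i j|i]; rewrite /restr ?gd; [rewrite andbC gs|case: ifP].
have h1 := IH (S :&: X) (restr g X) ltac:(lia) gX (supp_restr (X:=X) sg)
   (kbar_sub (restr_le g X) kg).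
have h2 := IH (S :&: ~: X) (restr g (~: X)) ltac:(lia) gX' (supp_restr (X:=~: X) sg)
   (kbar_sub (restr_le g (~: X)) kg).
have {h1}h1 : 2 * k * (#|S :&: X|).-1 <= E2 (restr g X).
  apply: h1 => u v; rewrite !in_setI => /andP[uS uX] /andP[vS vX] uv kr.
  exact: (mx u v uS vS uv (max_restr cX kg uX vX kr)).
have {h2}h2 : 2 * k * (#|S :&: ~: X|).-1 <= E2 (restr g (~: X)).
  apply: h2 => u v; rewrite !in_setI => /andP[uS uX] /andP[vS vX] uv kr.
  exact: (mx u v uS vS uv (max_restr cX' kg uX vX kr)).
have -> : (#|S|).-1 = (#|S :&: X|).-1 + (#|S :&: ~: X|).-1 + 1 by lia.
rewrite !mulnDr muln1; apply: leq_add; first exact: leq_add.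
by rewrite leq_mul2l kc orbT.
Qed.


Lemma E2_nedges g : is_graph g -> E2 g = 2 * nedges g.
Proof.
move=> [gs gd].
have pt : forall i j : 'I_n, g i j = (if i < j then g i j else 0) + (if j < i then g i j else 0).
  move=> i j; case: (ltngtP i j) => //= E; rewrite ?addn0 ?add0n //.
  have e : i = j by apply: val_inj.
  by subst; rewrite gd.
rewrite /E2 /nedges mul2n -addnn.
under eq_bigr => i _ do under eq_bigr => j _ do rewrite pt.
under eq_bigr => i _ do rewrite big_split.
rewrite big_split /=; congr (_ + _).
  by apply: eq_bigr => i _; rewrite [in RHS]big_mkcond.
rewrite exchange_big; apply: eq_bigr => i _; rewrite [in RHS]big_mkcond; apply: eq_bigr => j _.
by rewrite gs.
Qed.

Lemma add_graph g u v : is_graph g -> u != v -> is_graph (add_edge g u v).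
Proof.
move=> [gs gd] uv; split=> [i j|i]; rewrite /add_edge.
  by rewrite gs; case: (i == u); case: (i == v); case: (j == u); case: (j == v).
rewrite gd [(i == v) && _]andbC orbb.
case: (@eqP _ i u) => [->|] //=.
by rewrite (negbTE uv).
Qed.

Lemma E2_add_lt g u v : E2 g < E2 (add_edge g u v).
Proof.
rewrite /E2 /add_edge.
under [X in _ < X]eq_bigr => i _ do rewrite big_split.
rewrite big_split /= -[X in X < _]addn0 ltn_add2l.
rewrite (bigD1 u) //= (bigD1 v) //= !eqxx /=.
by rewrite -addnA.
Qed.

End Aux.

Theorem lemma3p5 (k n : nat) (m : mgraph n) :
  0 < k -> 0 < n -> is_graph m -> (in_calF k m <-> kmaximal k m).
Proof.
move=> k0 n0 gm; split.
  move=> [_ [kb mx]]; split=> // u v uv kb'.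
  have := mx _ (add_graph gm uv) kb'.
  rewrite -(leq_pmul2l (isT : 0 < 2)) -!E2_nedges //; last exact: add_graph.
  by rewrite leqNgt E2_add_lt.
move=> [kb mx]; split=> //; split=> // m' gm' kb'.
rewrite -(leq_pmul2l (isT : 0 < 2)) -!E2_nedges //.
have sT : forall g : mgraph n, supp g setT by move=> g i j _; rewrite !in_setT.
apply: leq_trans (upper (N := #|[set: 'I_n]|) (S := setT) _ gm' (sT _) kb') _ => //.
apply: (lower (N := #|[set: 'I_n]|)) => //.
by move=> u v _ _ uv; apply: mx.
Qed.
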